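(* There is a (deterministic) $\Sigma_{\diamond}$-matrix $\mathbb{M}$ such that $\rhd_{\diamond}=\rhd_{\mathbb{M}}$.
   Context: $\Sigma_\diamond$ is the signature with a single binary connective $\diamond$ (platypus). $\mathbb{B}_\diamond=\langle\{0,1\},\cdot,\{1\}\rangle$ is the two-valued Nmatrix interpreting $\diamond$ by $\diamond(0,0)=\{0\}$, $\diamond(1,1)=\{1\}$, $\diamond(0,1)=\diamond(1,0)=\{0,1\}$. For an Nmatrix (or matrix, where all connectives are interpreted as functions) $\mathbb{M}$ with designated set $D$, $\Gamma\rhd_{\mathbb{M}}\Delta$ iff every $\mathbb{M}$-valuation $v$ with $v(\Gamma)\subseteq D$ satisfies $v(\Delta)\cap D\neq\emptyset$; $\rhd_\diamond$ is $\rhd_{\mathbb{B}_\diamond}$. A matrix is deterministic, i.e. each connective is interpreted as a function. *)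

(* Defs.v *)
From Stdlib Require Import Bool.

Inductive fm : Type :=
| Var : nat -> fm
| Dia : fm -> fm -> fm.

Definition dia_nd (a b c : bool) : Prop :=
  if Bool.eqb a b then c = a else True.   (* diamond(0,0)={0}, diamond(1,1)={1}, else {0,1} *)

Definition Bdia_valuation (v : fm -> bool) : Prop :=
  forall p q, dia_nd (v p) (v q) (v (Dia p q)).

Definition cons_dia (Gamma Delta : fm -> Prop) : Prop :=
  forall v : fm -> bool, Bdia_valuation v ->
    (forall p, Gamma p -> v p = true) ->
    exists q, Delta q /\ v q = true.

Definition matrix_valuation {V : Type} (op : V -> V -> V) (v : fm -> V) : Prop :=
  forall p q, v (Dia p q) = op (v p) (v q).

Definition cons_mx {V : Type} (op : V -> V -> V) (D : V -> Prop)
    (Gamma Delta : fm -> Prop) : Prop :=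
  forall v : fm -> V, matrix_valuation op v ->
    (forall p, Gamma p -> D (v p)) ->
    exists q, Delta q /\ D (v q).

(* Main.v *)
Require Import Defs.
From Stdlib Require Import Bool.

Definition V0 : Type := ((fm -> bool) * fm)%type.
Definition D0 (x : V0) : Prop := fst x (snd x) = true.
Definition op0 (x y : V0) : V0 :=
  let (w, p) := x in let (w', q) := y in
  if Bool.eqb (w p) (w' q) then
    (if Bool.eqb (w (Dia p q)) (w p) then (w, Dia p q) else (fun _ => w p, Dia p q))
  else (w, Dia p q).

Theorem proposition3 :
  exists (V : Type) (op : V -> V -> V) (D : V -> Prop),
    forall Gamma Delta : fm -> Prop, cons_dia Gamma Delta <-> cons_mx op D Gamma Delta.
Proof.
  exists V0, op0, D0. intros G Dl. split.
  - intros H v Hv HG.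
    set (u := fun f => fst (v f) (snd (v f))).
    assert (Hu : Bdia_valuation u).
    { intros p q. unfold dia_nd, u. rewrite (Hv p q).
      destruct (v p) as [w p']; destruct (v q) as [w' q']. simpl.
      destruct (Bool.eqb (w p') (w' q')) eqn:E; [|exact I].
      destruct (Bool.eqb (w (Dia p' q')) (w p')) eqn:E2; simpl.
      + apply Bool.eqb_prop in E2. exact E2.
      + reflexivity. }
    destruct (H u Hu) as [q [Hq Hq2]].
    + intros p Hp. apply HG. exact Hp.
    + exists q. split; assumption.
  - intros H u Hu HG.
    destruct (H (fun f => (u, f))) as [q [Hq Hq2]].
    + intros p q. simpl. unfold op0.
      specialize (Hu p q). unfold dia_nd in Hu.
      destruct (Bool.eqb (u p) (u q)); [|reflexivity].
      rewrite Hu. rewrite Bool.eqb_reflx. reflexivity.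
    + intros p Hp. apply HG. exact Hp.
    + exists q. split; assumption.
Qed.
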